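(* Let $c$ be a positive integer and $c/(c+1)\le\vartheta<1$. Let $(Z_t)$ be the random walk of the context with $r=1$. Define the rational function $$\xi(w)=\frac{[(1-\vartheta)(c+1)-1]w^2+[2-(1-\vartheta)(c+1)]w-(1-\vartheta)w^{c+1}-\vartheta}{(1-\vartheta)w^{c+2}-(1-\vartheta)w^{c+1}-w^2+(1+\vartheta)w-\vartheta},\quad w\in(-1,1).$$ Then $\pi(u,c,1,\vartheta)=\xi^{(u)}(0)/u!$ for all $u\in\mathbb{N}$, where $\xi^{(u)}(0)$ is the $u$-th derivative of $\xi$ at $w=0$. Consequently, for the single-agent trust model with prior parameters $\alpha,\beta\in\mathbb{N}$ and $r=1$, $p_{\rm quit}=\pi(u_{\rm crit},c,1,\vartheta)$ with $u_{\rm crit}=\alpha-c\beta+1$.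
   Context: Random walk: for $\vartheta\in(0,1)$ and positive integers $c,r$, let $Z_0=0$ and $Z_t=Z_{t-1}+\Delta_t$ with $\Delta_t$ i.i.d., $\Delta_t=+c$ with probability $1-\vartheta$ and $-r$ with probability $\vartheta$. Define $\pi(u,c,r,\vartheta):=\mathbb{P}(\exists t\ge0: Z_t\ge u)$. Single-agent trust model: $(X_t)$ i.i.d. Bernoulli$(\vartheta)$; $\hat S_t=\sum_{s\le t}X_s\mathbf{1}_{\{A_s=1\}}$, $\hat F_t=\sum_{s\le t}(1-X_s)\mathbf{1}_{\{A_s=1\}}$, $\hat\vartheta_t=\frac{\alpha+\hat S_t}{\alpha+\beta+\hat S_t+\hat F_t}$; $A_t=1$ iff $r\hat\vartheta_n-c(1-\hat\vartheta_n)\ge0$ for all $n\le t-1$; $\tau:=\inf\{t\in\mathbb{N}\cup\{\infty\}: r\hat\vartheta_t-c(1-\hat\vartheta_t)<0\}$; $p_{\rm quit}:=\mathbb{P}(\tau<\infty)$. *)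

(* Defs.v *)
From Stdlib Require Import Reals Lra Lia ZArith List.
From Coquelicot Require Import Coquelicot.
Open Scope R_scope.

Fixpoint bool_lists (n : nat) : list (list bool) :=
  match n with
  | O => nil :: nil
  | S n => flat_map (fun l => (true :: l) :: (false :: l) :: nil) (bool_lists n)
  end.

Fixpoint bweight (p : R) (l : list bool) : R :=
  match l with
  | nil => 1
  | b :: l => (if b then p else 1 - p) * bweight p l
  end.

(** The list [l = [x_1; ...; x_T]] viewed as the sequence s |-> x_s (s >= 1). *)
Definition seq_of (l : list bool) : nat -> bool := fun s => nth (pred s) l false.

(** P(E) for an event E depending only on the first T coordinates X_1..X_T
    of an i.i.d. Bernoulli(p) sequence. *)
Definition fin_prob (p : R) (T : nat) (E : (nat -> bool) -> bool) : R :=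
  fold_right Rplus 0
    (map (fun l => bweight p l * (if E (seq_of l) then 1 else 0)) (bool_lists T)).

(** Probability of an increasing union of events E_T (E_T depending only on
    X_1..X_T), i.e. of "exists T, E_T", computed by continuity from below:
    P(U_T E_T) = lim_T P(E_T). *)
Definition union_prob (p : R) (E : nat -> (nat -> bool) -> bool) : R :=
  real (Lim_seq (fun T => fin_prob p T (E T))).

(** Z_t = sum_{s=1}^t Delta_s with Delta_s = +c if D_s, -r otherwise,
    where D_s are i.i.d. Bernoulli(1 - theta). *)
Fixpoint Zwalk (c r : nat) (D : nat -> bool) (t : nat) : Z :=
  match t with
  | O => 0%Z
  | S t' => (Zwalk c r D t' + (if D (S t') then Z.of_nat c else (- Z.of_nat r)%Z))%Z
  end.

Definition hit_by (u : Z) (c r : nat) (T : nat) (D : nat -> bool) : bool :=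
  existsb (fun t => Z.leb u (Zwalk c r D t)) (List.seq 0 (S T)).

Definition walk_pi (u : Z) (c r : nat) (theta : R) : R :=
  union_prob (1 - theta) (hit_by u c r).

Definition xi (c : nat) (theta w : R) : R :=
  (((1 - theta) * (INR c + 1) - 1) * w ^ 2 + (2 - (1 - theta) * (INR c + 1)) * w
     - (1 - theta) * w ^ (c + 1) - theta)
  / ((1 - theta) * w ^ (c + 2) - (1 - theta) * w ^ (c + 1) - w ^ 2
     + (1 + theta) * w - theta).

Definition theta_hat (alpha beta S F : nat) : R :=
  (INR alpha + INR S) / (INR alpha + INR beta + INR S + INR F).

Definition trust_ok (c r : nat) (th : R) : bool :=
  if Rlt_dec (INR r * th - INR c * (1 - th)) 0 then false else true.

(** trust_state X t = (hat S_t, hat F_t, A_{t+1}), where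
    hat S_t = sum_{s<=t} X_s 1{A_s = 1}, hat F_t = sum_{s<=t} (1 - X_s) 1{A_s = 1},
    A_{t+1} = 1 iff the trust condition holds at all n <= t. *)
Fixpoint trust_state (alpha beta c r : nat) (X : nat -> bool) (t : nat)
  : nat * nat * bool :=
  match t with
  | O => (0%nat, 0%nat, trust_ok c r (theta_hat alpha beta 0 0))
  | S t' =>
      let '(S0, F0, a) := trust_state alpha beta c r X t' in
      let S1 := if a then (if X (S t') then S (S0) else S0) else S0 in
      let F1 := if a then (if X (S t') then F0 else S F0) else F0 in
      (S1, F1, andb a (trust_ok c r (theta_hat alpha beta S1 F1)))
  end.

Definition S_hat alpha beta c r X t : nat := fst (fst (trust_state alpha beta c r X t)).
Definition F_hat alpha beta c r X t : nat := snd (fst (trust_state alpha beta c r X t)).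
Definition hat_theta_t alpha beta c r X t : R :=
  theta_hat alpha beta (S_hat alpha beta c r X t) (F_hat alpha beta c r X t).

Definition quit_by (alpha beta c r : nat) (T : nat) (X : nat -> bool) : bool :=
  existsb (fun n => negb (trust_ok c r (hat_theta_t alpha beta c r X n)))
          (List.seq 0 (S T)).

Definition p_quit (alpha beta c r : nat) (theta : R) : R :=
  union_prob theta (quit_by alpha beta c r).

(* Main.v *)
Require Import Defs.
From Stdlib Require Import Reals ZArith Lra Lia List Bool.
From Coquelicot Require Import Coquelicot.
Open Scope R_scope.

Definition fin_sum (p : R) (T : nat) (f : list bool -> R) : R :=
  fold_right Rplus 0 (map (fun l => bweight p l * f l) (bool_lists T)).

Lemma fold_flat (p:R) (L : list (list bool)) (f : list bool -> R) :
  fold_right Rplus 0 (map (fun l => bweight p l * f l)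
     (flat_map (fun l => (true :: l) :: (false :: l) :: nil) L))
  = p * fold_right Rplus 0 (map (fun l => bweight p l * f (true::l)) L)
    + (1-p) * fold_right Rplus 0 (map (fun l => bweight p l * f (false::l)) L).
Proof. induction L as [|l L IH]; simpl; [ring|]. rewrite IH. ring. Qed.

Lemma fin_sum_S p T f : fin_sum p (S T) f =
  p * fin_sum p T (fun l => f (true::l)) + (1-p) * fin_sum p T (fun l => f (false::l)).
Proof. unfold fin_sum. simpl bool_lists. apply fold_flat. Qed.

Lemma fin_sum_0 p f : fin_sum p 0 f = f nil.
Proof. unfold fin_sum. simpl. ring. Qed.

Lemma fin_sum_ext_len p T f g :
  (forall l, length l = T -> f l = g l) -> fin_sum p T f = fin_sum p T g.
Proof.
  revert f g; induction T as [|T IH]; intros f g H.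
  - rewrite !fin_sum_0. apply H. reflexivity.
  - rewrite !fin_sum_S. f_equal; f_equal; apply IH; intros l Hl; apply H; simpl; lia.
Qed.

Lemma fin_sum_1 p T : fin_sum p T (fun _ => 1) = 1.
Proof.
  induction T as [|T IH]. - rewrite fin_sum_0; reflexivity.
  - rewrite fin_sum_S, IH. ring.
Qed.

Lemma fin_sum_negb p T f : fin_sum p T f = fin_sum (1-p) T (fun l => f (map negb l)).
Proof.
  revert f; induction T as [|T IH]; intros f.
  - rewrite !fin_sum_0. reflexivity.
  - rewrite !fin_sum_S. rewrite (IH (fun l => f (true :: l))), (IH (fun l => f (false :: l))).
    simpl. ring.
Qed.

Lemma fin_prob_eq p T E : fin_prob p T E = fin_sum p T (fun l => if E (seq_of l) then 1 else 0).
Proof. reflexivity. Qed.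

Lemma INR_IZR n : INR n = IZR (Z.of_nat n).
Proof. apply INR_IZR_INZ. Qed.

Lemma trust_ok_iff (alpha beta c s f : nat) : (0 < alpha + beta)%nat ->
  trust_ok c 1 (theta_hat alpha beta s f) =
  Z.leb 0 (Z.of_nat alpha - Z.of_nat c * Z.of_nat beta + Z.of_nat s - Z.of_nat c * Z.of_nat f).
Proof.
  intros Hab. unfold trust_ok, theta_hat.
  set (den := INR alpha + INR beta + INR s + INR f).
  assert (Hden : 0 < den).
  { unfold den. assert (0 < INR (alpha + beta)) by (apply lt_0_INR; lia).
    rewrite plus_INR in H. pose proof (pos_INR s). pose proof (pos_INR f). lra. }
  set (J := (Z.of_nat alpha - Z.of_nat c * Z.of_nat beta + Z.of_nat s - Z.of_nat c * Z.of_nat f)%Z).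
  assert (HJ : IZR J = INR alpha - INR c * INR beta + INR s - INR c * INR f).
  { unfold J. repeat (rewrite ?minus_IZR, ?plus_IZR, ?mult_IZR). rewrite <- !INR_IZR. ring. }
  set (x := INR 1 * ((INR alpha + INR s) / den) - INR c * (1 - (INR alpha + INR s) / den)).
  assert (Hx : x * den = IZR J).
  { rewrite HJ. unfold x. replace (INR 1) with 1 by reflexivity. unfold den. field. fold den. lra. }
  destruct (Rlt_dec x 0) as [H|H]; destruct (Z.leb_spec 0 J) as [H'|H']; auto.
  - apply IZR_le in H'. nra.
  - apply IZR_lt in H'. nra.
Qed.

Lemma Zwalk_S c r D t : Zwalk c r D (S t) =
  (Zwalk c r D t + (if D (S t) then Z.of_nat c else (- Z.of_nat r)%Z))%Z.
Proof. reflexivity. Qed.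

Lemma hit_by_iff u c r T D :
  hit_by u c r T D = true <-> exists n, (n <= T)%nat /\ (u <= Zwalk c r D n)%Z.
Proof.
  unfold hit_by. rewrite existsb_exists. split.
  - intros [n [Hn Hu]]. apply in_seq in Hn. exists n. split; [lia|]. apply Z.leb_le; auto.
  - intros [n [Hn Hu]]. exists n. split. apply in_seq; lia. apply Z.leb_le; auto.
Qed.

Section Quit.
Variables (alpha beta c : nat) (X D : nat -> bool).
Hypothesis Hab : (0 < alpha + beta)%nat.

Definition okn n := trust_ok c 1 (hat_theta_t alpha beta c 1 X n).
Definition J0 := (Z.of_nat alpha - Z.of_nat c * Z.of_nat beta)%Z.

Lemma okn_eq n : okn n = Z.leb 0 (J0 + Z.of_nat (S_hat alpha beta c 1 X n)
   - Z.of_nat c * Z.of_nat (F_hat alpha beta c 1 X n)).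
Proof. unfold okn, hat_theta_t, J0. rewrite trust_ok_iff by auto. f_equal. Qed.

Lemma quit_by_S T : quit_by alpha beta c 1 (S T) X = quit_by alpha beta c 1 T X || negb (okn (S T)).
Proof.
  unfold quit_by. rewrite seq_S, existsb_app. simpl. rewrite orb_false_r. reflexivity.
Qed.

Lemma quit_by_false T : quit_by alpha beta c 1 T X = false -> forall n, (n <= T)%nat -> okn n = true.
Proof.
  unfold quit_by. intros H n Hn.
  destruct (okn n) eqn:E; auto. exfalso.
  assert (existsb (fun n0 : nat => negb (trust_ok c 1 (hat_theta_t alpha beta c 1 X n0))) (seq 0 (S T)) = true).
  { apply existsb_exists. exists n. split. apply in_seq; lia. unfold okn in E. rewrite E. reflexivity. }
  congruence.
Qed.


Lemma inv_state T : (forall s, (1 <= s <= T)%nat -> X s = negb (D s)) ->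
  (forall n, (n <= T)%nat -> okn n = true) ->
  snd (trust_state alpha beta c 1 X T) = true /\
  (Z.of_nat (S_hat alpha beta c 1 X T) - Z.of_nat c * Z.of_nat (F_hat alpha beta c 1 X T)
   = - Zwalk c 1 D T)%Z.
Proof.
  induction T as [|T IH]; intros HXD Hok.
  - split.
    + pose proof (Hok 0%nat (le_n 0)). unfold okn, hat_theta_t, S_hat, F_hat in H. simpl in *. exact H.
    + unfold S_hat, F_hat. simpl. lia.
  - destruct IH as [Ha HW]. { intros s Hs; apply HXD; lia. } { intros n Hn; apply Hok; lia. }
    pose proof (Hok (S T) (le_n _)) as HokS.
    unfold okn, hat_theta_t, S_hat, F_hat in *.
    simpl trust_state in *.
    destruct (trust_state alpha beta c 1 X T) as [[S0 F0] a] eqn:Est.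
    simpl in Ha, HW. subst a. simpl in *.
    split.
    + exact HokS.
    + rewrite HXD by lia. destruct (D (S T)); cbn [negb]; rewrite ?Nat2Z.inj_succ; lia.
Qed.

Lemma quit_iff T : (forall s, (1 <= s <= T)%nat -> X s = negb (D s)) -> quit_by alpha beta c 1 T X = true <->
   exists n, (n <= T)%nat /\ (J0 + 1 <= Zwalk c 1 D n)%Z.
Proof.
  induction T as [|T IH]; intros HXD.
  - unfold quit_by. simpl. pose proof (okn_eq 0) as E. unfold okn in E.
    unfold S_hat, F_hat in E. simpl in E. rewrite E. rewrite orb_false_r.
    split.
    + intros H. exists 0%nat. split; [lia|]. simpl. destruct (Z.leb_spec 0 (J0 + 0 - Z.of_nat c * 0)); simpl in H; try discriminate. lia.
    + intros [n [Hn Hz]]. assert (n = 0%nat) by lia. subst n. simpl in Hz.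
      destruct (Z.leb_spec 0 (J0 + 0 - Z.of_nat c * 0)); simpl; auto. lia.
  - specialize (IH (fun s Hs => HXD s ltac:(lia))).
    rewrite quit_by_S. destruct (quit_by alpha beta c 1 T X) eqn:Q.
    + simpl. split; auto. intros _. destruct (proj1 IH eq_refl) as [n [Hn Hz]]. exists n; split; auto.
    + simpl. pose proof (quit_by_false T Q) as Hok.
      destruct (inv_state T (fun s Hs => HXD s ltac:(lia)) Hok) as [Ha HW].
      assert (HnoT : ~ exists n, (n <= T)%nat /\ (J0 + 1 <= Zwalk c 1 D n)%Z).
      { intros H. apply IH in H. discriminate. }
      rewrite okn_eq.
      assert (HS : (Z.of_nat (S_hat alpha beta c 1 X (S T)) - Z.of_nat c * Z.of_nat (F_hat alpha beta c 1 X (S T)) = - Zwalk c 1 D (S T))%Z).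
      { unfold S_hat, F_hat in *. simpl trust_state.
        destruct (trust_state alpha beta c 1 X T) as [[S0 F0] a] eqn:Est.
        simpl in Ha, HW. subst a. simpl.
        rewrite HXD by lia. destruct (D (S T)); cbn [negb]; rewrite ?Nat2Z.inj_succ; lia. }
      split.
      * intros H. exists (S T). split; auto.
        destruct (Z.leb_spec 0 (J0 + Z.of_nat (S_hat alpha beta c 1 X (S T)) -
           Z.of_nat c * Z.of_nat (F_hat alpha beta c 1 X (S T)))); simpl in H; try discriminate. lia.
      * intros [n [Hn Hz]]. destruct (Nat.eq_dec n (S T)) as [->|Hne].
        -- destruct (Z.leb_spec 0 (J0 + Z.of_nat (S_hat alpha beta c 1 X (S T)) -
           Z.of_nat c * Z.of_nat (F_hat alpha beta c 1 X (S T)))); simpl; auto. lia.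
        -- exfalso. apply HnoT. exists n; split; auto; lia.
Qed.

End Quit.

Lemma nth_map_negb l n : (n < length l)%nat -> nth n (map negb l) false = negb (nth n l false).
Proof.
  intros H. rewrite (nth_indep (map negb l) false (negb false)) by (rewrite length_map; auto).
  apply map_nth.
Qed.

Theorem part2 (c : nat) (theta : R) alpha beta : (0 < alpha + beta)%nat ->
      p_quit alpha beta c 1 theta
      = walk_pi (Z.of_nat alpha - Z.of_nat c * Z.of_nat beta + 1)%Z c 1 theta.
Proof.
  intros Hab. unfold p_quit, walk_pi, union_prob. f_equal. apply Lim_seq_ext. intros T.
  rewrite !fin_prob_eq. rewrite fin_sum_negb. apply fin_sum_ext_len. intros l Hl.
  replace (quit_by alpha beta c 1 T (seq_of (map negb l)))
     with (hit_by (Z.of_nat alpha - Z.of_nat c * Z.of_nat beta + 1) c 1 T (seq_of l)); [reflexivity|].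
  apply eq_iff_eq_true. rewrite hit_by_iff.
  rewrite (quit_iff alpha beta c (seq_of (map negb l)) (seq_of l) Hab).
  - unfold J0. tauto.
  - intros s Hs. unfold seq_of. apply nth_map_negb. lia.
Qed.

Lemma fin_sum_ext p T f g : (forall l, f l = g l) -> fin_sum p T f = fin_sum p T g.
Proof. intros H; apply fin_sum_ext_len; intros; apply H. Qed.

Lemma Zwalk_cons c r b l t : Zwalk c r (seq_of (b::l)) (S t) =
  ((if b then Z.of_nat c else (- Z.of_nat r)%Z) + Zwalk c r (seq_of l) t)%Z.
Proof.
  induction t as [|t IH].
  - destruct b; simpl; lia.
  - rewrite Zwalk_S, IH, (Zwalk_S c r (seq_of l) t).
    replace (seq_of (b::l) (S (S t))) with (seq_of l (S t)) by reflexivity. lia.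
Qed.

Lemma hit_cons u c r T b l : hit_by u c r (S T) (seq_of (b::l)) =
  orb (Z.leb u 0) (hit_by (u - (if b then Z.of_nat c else (- Z.of_nat r)%Z)) c r T (seq_of l)).
Proof.
  apply eq_iff_eq_true. rewrite orb_true_iff, !hit_by_iff, Z.leb_le. split.
  - intros [n [Hn Hu]]. destruct n as [|n].
    + left. simpl in Hu. lia.
    + right. exists n. split; [lia|]. rewrite Zwalk_cons in Hu. lia.
  - intros [Hu|[n [Hn Hu]]].
    + exists 0%nat. split; [lia|]. simpl. lia.
    + exists (S n). split; [lia|]. rewrite Zwalk_cons. lia.
Qed.

Fixpoint Mw (c : nat) (p : R) (T : nat) (u : Z) : R :=
  match T with
  | O => if Z.leb u 0 then 1 else 0
  | S T => if Z.leb u 0 then 1 else p * Mw c p T (u - Z.of_nat c) + (1-p) * Mw c p T (u+1)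
  end.

Lemma A_M c p T u : fin_prob p T (hit_by u c 1 T) = Mw c p T u.
Proof.
  revert u; induction T as [|T IH]; intros u.
  - rewrite fin_prob_eq, fin_sum_0. unfold hit_by. simpl.
    destruct (u <=? 0)%Z; reflexivity.
  - rewrite fin_prob_eq, fin_sum_S. simpl Mw.
    rewrite (fin_sum_ext _ _ (fun l => if hit_by u c 1 (S T) (seq_of (true :: l)) then 1 else 0) (fun l => if orb (Z.leb u 0) (hit_by (u - Z.of_nat c) c 1 T (seq_of l)) then 1 else 0))
      by (intros l; rewrite hit_cons; reflexivity).
    rewrite (fin_sum_ext _ _ (fun l => if hit_by u c 1 (S T) (seq_of (false :: l)) then 1 else 0)
       (fun l => if orb (Z.leb u 0) (hit_by (u + 1) c 1 T (seq_of l)) then 1 else 0)).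
    2:{ intros l. rewrite hit_cons. replace (u - - Z.of_nat 1)%Z with (u+1)%Z by lia. reflexivity. }
    destruct (Z.leb u 0); simpl.
    + rewrite fin_sum_1. ring.
    + rewrite <- !fin_prob_eq, !IH. reflexivity.
Qed.

Section MProps.
Variables (c : nat) (p : R).
Hypothesis Hp : 0 <= p <= 1.

Lemma M_bounds T u : 0 <= Mw c p T u <= 1.
Proof.
  revert u; induction T as [|T IH]; intros u; simpl.
  - destruct (u <=? 0)%Z; lra.
  - destruct (u <=? 0)%Z; [lra|].
    pose proof (IH (u - Z.of_nat c)%Z); pose proof (IH (u+1)%Z). nra.
Qed.

Lemma M_le0 T u : (u <= 0)%Z -> Mw c p T u = 1.
Proof. intros H. apply Z.leb_le in H. destruct T; simpl; rewrite H; reflexivity. Qed.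

Lemma M_rec T u : (0 < u)%Z -> Mw c p (S T) u = p * Mw c p T (u - Z.of_nat c) + (1-p) * Mw c p T (u+1).
Proof. intros H. simpl. destruct (Z.leb_spec u 0); [lia|reflexivity]. Qed.

Lemma M_mono T u : Mw c p T u <= Mw c p (S T) u.
Proof.
  revert u; induction T as [|T IH]; intros u.
  - destruct (Z.leb_spec u 0) as [H|H].
    + rewrite !M_le0 by auto. lra.
    + simpl Mw at 1. destruct (Z.leb_spec u 0); [lia|]. apply M_bounds.
  - destruct (Z.leb_spec u 0) as [H|H].
    + rewrite !M_le0 by auto. lra.
    + rewrite (M_rec T u), (M_rec (S T) u) by lia.
      pose proof (IH (u - Z.of_nat c)%Z); pose proof (IH (u+1)%Z). nra.
Qed.

Lemma M_le_f (f : Z -> R) : (forall u, 0 <= f u) -> (forall u, (u <= 0)%Z -> f u = 1) ->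
  (forall u, (0 < u)%Z -> f u = p * f (u - Z.of_nat c)%Z + (1-p) * f (u+1)%Z) ->
  forall T u, Mw c p T u <= f u.
Proof.
  intros H0 H1 Hr T; induction T as [|T IH]; intros u.
  - simpl. destruct (Z.leb_spec u 0) as [H|H]. rewrite H1 by auto; lra. apply H0.
  - destruct (Z.leb_spec u 0) as [H|H].
    + rewrite M_le0, H1 by auto. lra.
    + rewrite M_rec, Hr by lia.
      pose proof (IH (u - Z.of_nat c)%Z); pose proof (IH (u+1)%Z). nra.
Qed.

Definition piw (u : Z) : R := real (Lim_seq (fun T => Mw c p T u)).

Lemma piw_lim u : is_lim_seq (fun T => Mw c p T u) (piw u).
Proof.
  destruct (ex_finite_lim_seq_incr (fun T => Mw c p T u) 1) as [l Hl].
  - intros n; apply M_mono.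
  - intros n; apply M_bounds.
  - unfold piw. rewrite (is_lim_seq_unique _ _ Hl). exact Hl.
Qed.

Lemma piw_le_f (f : Z -> R) : (forall u, 0 <= f u) -> (forall u, (u <= 0)%Z -> f u = 1) ->
  (forall u, (0 < u)%Z -> f u = p * f (u - Z.of_nat c)%Z + (1-p) * f (u+1)%Z) ->
  forall u, piw u <= f u.
Proof.
  intros H0 H1 Hr u.
  assert (H := is_lim_seq_le (fun T => Mw c p T u) (fun _ => f u) (piw u) (f u)
     (fun T => M_le_f f H0 H1 Hr T u) (piw_lim u) (is_lim_seq_const (f u))).
  simpl in H. exact H.
Qed.

Lemma piw_bounds u : 0 <= piw u <= 1.
Proof.
  split.
  - assert (H := is_lim_seq_le (fun _ => 0) (fun T => Mw c p T u) 0 (piw u)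
     (fun T => proj1 (M_bounds T u)) (is_lim_seq_const 0) (piw_lim u)). simpl in H. exact H.
  - assert (H := is_lim_seq_le (fun T => Mw c p T u) (fun _ => 1) (piw u) 1
     (fun T => proj2 (M_bounds T u)) (piw_lim u) (is_lim_seq_const 1)). simpl in H. exact H.
Qed.

Lemma piw_le0 u : (u <= 0)%Z -> piw u = 1.
Proof.
  intros H. unfold piw. rewrite (Lim_seq_ext _ (fun _ => 1)) by (intros; apply M_le0; auto).
  rewrite Lim_seq_const. reflexivity.
Qed.

Lemma piw_rec u : (0 < u)%Z -> piw u = p * piw (u - Z.of_nat c)%Z + (1-p) * piw (u+1)%Z.
Proof.
  intros Hu.
  assert (H1 : is_lim_seq (fun T => Mw c p (S T) u) (piw u)).
  { apply (is_lim_seq_incr_1 (fun T => Mw c p T u)). apply piw_lim. }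
  assert (H2 : is_lim_seq (fun T => Mw c p (S T) u) (p * piw (u - Z.of_nat c)%Z + (1-p) * piw (u+1)%Z)).
  { apply (is_lim_seq_ext (fun T => p * Mw c p T (u - Z.of_nat c) + (1-p) * Mw c p T (u+1))).
    { intros T. rewrite M_rec by auto. reflexivity. }
    apply is_lim_seq_plus'; apply is_lim_seq_mult'; try apply is_lim_seq_const; apply piw_lim. }
  apply is_lim_seq_unique in H1. apply is_lim_seq_unique in H2. rewrite H1 in H2.
  injection H2. auto.
Qed.

End MProps.

Fixpoint wsum (f : Z -> R) (u : Z) (n : nat) : R :=
  match n with O => 0 | S n => f u + wsum f (u-1)%Z n end.

Lemma wsum_last f u n : wsum f u (S n) = wsum f u n + f (u - Z.of_nat n)%Z.
Proof.
  revert u; induction n as [|n IH]; intros u.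
  - simpl. replace (u - 0)%Z with u by lia. ring.
  - change (wsum f u (S (S n))) with (f u + wsum f (u-1)%Z (S n)).
    rewrite IH. change (wsum f u (S n)) with (f u + wsum f (u-1)%Z n).
    replace (u - 1 - Z.of_nat n)%Z with (u - Z.of_nat (S n))%Z by lia. ring.
Qed.

Lemma wsum_ext f g u n : (forall k, (k < n)%nat -> f (u - Z.of_nat k)%Z = g (u - Z.of_nat k)%Z) ->
  wsum f u n = wsum g u n.
Proof.
  revert u; induction n as [|n IH]; intros u H; simpl; auto.
  f_equal.
  - specialize (H 0%nat ltac:(lia)). replace (u - Z.of_nat 0)%Z with u in H by lia. exact H.
  - apply IH. intros k Hk. replace (u - 1 - Z.of_nat k)%Z with (u - Z.of_nat (S k))%Z by lia.
    apply H. lia.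
Qed.

Lemma wsum_lb f u n A : (forall k, (k < n)%nat -> A <= f (u - Z.of_nat k)%Z) -> INR n * A <= wsum f u n.
Proof.
  revert u; induction n as [|n IH]; intros u H; simpl wsum.
  - simpl. lra.
  - rewrite S_INR.
    assert (H0 := H 0%nat ltac:(lia)). replace (u - Z.of_nat 0)%Z with u in H0 by lia.
    assert (H1 : INR n * A <= wsum f (u - 1)%Z n).
    { apply IH. intros k Hk. replace (u - 1 - Z.of_nat k)%Z with (u - Z.of_nat (S k))%Z by lia.
      apply H. lia. }
    lra.
Qed.

Lemma wsum_ub f u n B : (forall k, (k < n)%nat -> f (u - Z.of_nat k)%Z <= B) -> wsum f u n <= INR n * B.
Proof.
  revert u; induction n as [|n IH]; intros u H; simpl wsum.
  - simpl. lra.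
  - rewrite S_INR.
    assert (H0 := H 0%nat ltac:(lia)). replace (u - Z.of_nat 0)%Z with u in H0 by lia.
    assert (H1 : wsum f (u - 1)%Z n <= INR n * B).
    { apply IH. intros k Hk. replace (u - 1 - Z.of_nat k)%Z with (u - Z.of_nat (S k))%Z by lia.
      apply H. lia. }
    lra.
Qed.

Lemma wsum_const f u n A : (forall k, (k < n)%nat -> f (u - Z.of_nat k)%Z = A) -> wsum f u n = INR n * A.
Proof.
  intros H. apply Rle_antisym.
  - apply wsum_ub. intros k Hk. rewrite H; auto; lra.
  - apply wsum_lb. intros k Hk. rewrite H; auto; lra.
Qed.

Lemma Zind (P : Z -> Prop) : (forall u, (u <= 0)%Z -> P u) ->
  (forall u, (0 < u)%Z -> (forall v, (v < u)%Z -> P v) -> P u) -> forall u, P u.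
Proof.
  intros H0 HS.
  assert (forall n u, (u < Z.of_nat n)%Z -> P u).
  { induction n as [|n IH]; intros u Hu.
    - apply H0. lia.
    - destruct (Z.le_gt_cases u 0). apply H0; auto. apply HS; [lia|]. intros v Hv. apply IH. lia. }
  intros u. apply (H (S (Z.to_nat u))). lia.
Qed.

Fixpoint bfuel (c : nat) (r : R) (n : nat) (u : Z) : R :=
  match n with O => 1 | S n => if Z.leb u 0 then 1 else r * wsum (bfuel c r n) (u-1)%Z c end.
Definition bt c r u := bfuel c r (S (Z.to_nat u)) u.

Lemma bfuel_stable c r n : forall m u, (Z.to_nat u < n)%nat -> (Z.to_nat u < m)%nat ->
  bfuel c r n u = bfuel c r m u.
Proof.
  induction n as [|n IH]; intros m u Hn Hm; [lia|].
  destruct m as [|m]; [lia|]. simpl.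
  destruct (Z.leb_spec u 0); auto.
  f_equal. apply wsum_ext. intros k Hk. apply IH; lia.
Qed.

Lemma bt_le0 c r u : (u <= 0)%Z -> bt c r u = 1.
Proof. intros H. unfold bt. simpl. destruct (Z.leb_spec u 0); [reflexivity|lia]. Qed.

Lemma bt_rec c r u : (0 < u)%Z -> bt c r u = r * wsum (bt c r) (u-1)%Z c.
Proof.
  intros H. unfold bt at 1. simpl. destruct (Z.leb_spec u 0); [lia|].
  f_equal. apply wsum_ext. intros k Hk. unfold bt. apply bfuel_stable; lia.
Qed.

Section BSeq.
Variables (c : nat) (p : R).
Hypothesis Hc : (1 <= c)%nat.
Hypothesis Hp : 0 < p.
Hypothesis Hq : 0 < 1 - p.
Hypothesis Hpc : p * INR c <= 1 - p.

Let q := 1 - p.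
Let r := p / q.
Let b := bt c r.

Lemma r_pos : 0 < r.
Proof. unfold r, q. apply Rdiv_lt_0_compat; lra. Qed.

Lemma rc_le1 : r * INR c <= 1.
Proof. unfold r, q. apply (Rmult_le_reg_l (1-p)); [lra|]. field_simplify; lra. Qed.

Lemma b_bounds u : 0 <= b u <= 1.
Proof.
  pose proof r_pos; pose proof rc_le1.
  induction u as [u Hu|u Hu IH] using Zind.
  - unfold b; rewrite bt_le0 by auto. lra.
  - unfold b; rewrite bt_rec by auto. fold b.
    assert (INR c * 0 <= wsum b (u-1)%Z c). { apply wsum_lb. intros k Hk. apply IH. lia. }
    assert (wsum b (u-1)%Z c <= INR c * 1). { apply wsum_ub. intros k Hk. apply IH. lia. }
    split; nra.
Qed.

Lemma b_orig u : (0 < u)%Z -> b u = p * b (u - Z.of_nat c)%Z + (1-p) * b (u+1)%Z.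
Proof.
  intros Hu. destruct c as [|c'] eqn:Ec; [lia|].
  assert (E1 : b (u+1)%Z = r * (b u + wsum b (u-1)%Z c')).
  { unfold b. rewrite bt_rec by lia. replace (u + 1 - 1)%Z with u by lia. reflexivity. }
  assert (E2 : b u = r * (wsum b (u-1)%Z c' + b (u - Z.of_nat (S c'))%Z)).
  { unfold b. rewrite bt_rec by lia. fold b. rewrite wsum_last.
    replace (u - 1 - Z.of_nat c')%Z with (u - Z.of_nat (S c'))%Z by lia. reflexivity. }
  set (W := wsum b (u-1)%Z c') in *. set (B := b (u - Z.of_nat (S c'))%Z) in *.
  rewrite E1.
  assert (Hqr : q * r = p) by (unfold r; field; unfold q; lra).
  assert (H2 : q * b u = p * (W + B)) by (rewrite E2, <- Hqr; ring).
  fold q. transitivity (p * b u + q * b u). unfold q; ring.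
  rewrite H2. rewrite <- Hqr. ring.
Qed.

Lemma b_mono : forall u v, (v <= u)%Z -> b u <= b v.
Proof.
  intros u. induction u as [u Hu|u Hu IH] using Zind; intros v Hv.
  - unfold b. rewrite !bt_le0 by lia. lra.
  - assert (Hstep : b u <= b (u-1)%Z).
    { destruct (Z.eq_dec u 1) as [->|Hne].
      - simpl. pose proof (b_bounds 1). unfold b at 2. rewrite bt_le0 by lia. lra.
      - pose proof (b_orig (u-1)%Z ltac:(lia)) as E. replace (u - 1 + 1)%Z with u in E by lia.
        pose proof (IH (u-1)%Z ltac:(lia) (u - 1 - Z.of_nat c)%Z ltac:(lia)).
        fold q in E.
        assert (p * b (u-1)%Z <= p * b (u - 1 - Z.of_nat c)%Z) by (apply Rmult_le_compat_l; lra).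
        assert (q * b (u-1)%Z = b (u-1)%Z - p * b (u-1)%Z) by (unfold q; ring).
        assert (q * b u <= q * b (u-1)%Z) by lra.
        apply Rmult_le_reg_l with q; [unfold q; lra|auto]. }
    destruct (Z.eq_dec v u) as [->|Hne]; [lra|].
    pose proof (IH (u-1)%Z ltac:(lia) v ltac:(lia)). lra.
Qed.

Lemma b_decay u : (0 < u)%Z -> b u <= (r * INR c) * b (u - Z.of_nat c)%Z.
Proof.
  intros Hu. unfold b at 1. rewrite bt_rec by auto. fold b. pose proof r_pos.
  assert (wsum b (u-1)%Z c <= INR c * b (u - Z.of_nat c)%Z).
  { apply wsum_ub. intros k Hk. apply b_mono. lia. }
  rewrite Rmult_assoc. apply Rmult_le_compat_l; lra.
Qed.

Lemma b_pow k : b (1 + Z.of_nat (k * c))%Z <= (r * INR c) ^ (S k).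
Proof.
  pose proof r_pos. pose proof (pos_INR c).
  induction k as [|k IH].
  - simpl. pose proof (b_decay 1 ltac:(lia)). unfold b at 2 in H1. rewrite bt_le0 in H1 by lia.
    lra.
  - pose proof (b_decay (1 + Z.of_nat (S k * c))%Z ltac:(lia)).
    replace (1 + Z.of_nat (S k * c) - Z.of_nat c)%Z with (1 + Z.of_nat (k * c))%Z in H1 by lia.
    change ((r * INR c) ^ S (S k)) with ((r * INR c) * (r * INR c) ^ (S k)).
    assert (0 <= r * INR c) by nra. nra.
Qed.

Lemma b_one : r * INR c = 1 -> forall u, b u = 1.
Proof.
  intros Hrc u. induction u as [u Hu|u Hu IH] using Zind.
  - unfold b; apply bt_le0; auto.
  - unfold b. rewrite bt_rec by auto. fold b.
    rewrite (wsum_const _ _ _ 1). lra. intros k Hk. apply IH. lia.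
Qed.

Let pi := piw c p.
Hypothesis Hp1 : 0 <= p <= 1.

Lemma pi_le_b u : pi u <= b u.
Proof.
  apply piw_le_f; auto.
  - intros v; apply b_bounds.
  - intros v Hv; unfold b; apply bt_le0; auto.
  - intros v Hv; apply b_orig; auto.
Qed.

Let e u := b u - pi u.

Lemma e_le0 u : (u <= 0)%Z -> e u = 0.
Proof. intros H. unfold e, pi, b. rewrite bt_le0, piw_le0 by auto. ring. Qed.

Lemma e_nonneg u : 0 <= e u.
Proof. unfold e. pose proof (pi_le_b u). lra. Qed.

Lemma e_orig u : (0 < u)%Z -> e u = p * e (u - Z.of_nat c)%Z + (1-p) * e (u+1)%Z.
Proof.
  intros Hu. unfold e, pi. rewrite (b_orig u Hu), (piw_rec c p Hp1 u Hu). ring.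
Qed.

Lemma e_tel n : q * e (Z.of_nat n + 1)%Z - p * wsum e (Z.of_nat n) c = q * e 1%Z.
Proof.
  induction n as [|n IH].
  - simpl. rewrite (wsum_const _ _ _ 0). ring. intros k Hk. apply e_le0. lia.
  - assert (exists c', c = S c') as [c' Ec] by (exists (pred c); lia).
    rewrite <- IH.
    pose proof (e_orig (Z.of_nat n + 1)%Z ltac:(lia)) as E.
    replace (Z.of_nat (S n)) with (Z.of_nat n + 1)%Z by lia.
    replace (wsum e (Z.of_nat n + 1)%Z c) with (e (Z.of_nat n + 1)%Z + wsum e (Z.of_nat n + 1 - 1)%Z c') by (rewrite Ec; reflexivity).
    replace (Z.of_nat n + 1 - 1)%Z with (Z.of_nat n) by lia.
    replace (wsum e (Z.of_nat n) c) with (wsum e (Z.of_nat n) c' + e (Z.of_nat n + 1 - Z.of_nat c)%Z).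
    2:{ rewrite Ec, wsum_last. f_equal. f_equal. lia. }
    assert (Hx : (1-p) * e (Z.of_nat n + 1 + 1)%Z = e (Z.of_nat n + 1)%Z - p * e (Z.of_nat n + 1 - Z.of_nat c)%Z) by lra. unfold q. rewrite Hx. ring.
Qed.

Lemma e_tel' u : (0 < u)%Z -> q * e u = q * e 1%Z + p * wsum e (u-1)%Z c.
Proof.
  intros Hu. pose proof (e_tel (Z.to_nat (u-1))).
  replace (Z.of_nat (Z.to_nat (u - 1)) + 1)%Z with u in H by lia.
  replace (Z.of_nat (Z.to_nat (u - 1))) with (u-1)%Z in H by lia. lra.
Qed.

Lemma e1_zero : e 1%Z = 0.
Proof.
  set (m := e 1%Z). assert (Hm : 0 <= m) by apply e_nonneg.
  assert (Hlow : forall u, (0 < u)%Z -> m <= e u).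
  { intros u Hu. pose proof (e_tel' u Hu).
    assert (INR c * 0 <= wsum e (u-1)%Z c) by (apply wsum_lb; intros; apply e_nonneg).
    assert (q * m <= q * e u) by (fold m in H; nra).
    apply Rmult_le_reg_l with q; [unfold q; lra|auto]. }
  pose proof rc_le1.
  destruct (Rle_lt_or_eq_dec _ _ H) as [Hlt|Heq].
  - (* negative drift *)
    apply Rle_antisym; auto.
    apply Rnot_lt_le. intros Hpos.
    assert (Habs : Rabs (r * INR c) < 1).
    { pose proof r_pos. pose proof (pos_INR c). rewrite Rabs_pos_eq by nra. auto. }
    destruct (pow_lt_1_zero _ Habs m Hpos) as [N HN].
    specialize (HN (S N) ltac:(lia)).
    pose proof (b_pow N).
    pose proof (Hlow (1 + Z.of_nat (N * c))%Z ltac:(lia)).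
    assert (e (1 + Z.of_nat (N * c))%Z <= b (1 + Z.of_nat (N * c))%Z).
    { unfold e. pose proof (piw_bounds c p Hp1 (1 + Z.of_nat (N * c))%Z). unfold pi. lra. }
    pose proof (Rle_abs ((r * INR c) ^ S N)). lra.
  - (* zero drift *)
    assert (Hb1 := b_one Heq).
    assert (Hpq : p * INR c = q).
    { replace (p * INR c) with (q * (r * INR c)) by (unfold r; field; unfold q; lra).
      rewrite Heq; ring. }
    assert (Hc0 : 0 < INR c) by (apply lt_0_INR; lia).
    assert (Hlin : forall u, m * IZR u <= e u * INR c).
    { intros u. induction u as [u Hu|u Hu IH] using Zind.
      - rewrite e_le0 by auto. apply IZR_le in Hu. nra.
      - pose proof (e_tel' u Hu). fold m in H0.
        assert (INR c * (m * IZR (u - Z.of_nat c) / INR c) <= wsum e (u-1)%Z c).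
        { apply wsum_lb. intros k Hk. specialize (IH (u - 1 - Z.of_nat k)%Z ltac:(lia)).
          replace (u - 1 - Z.of_nat k)%Z with ((u-1) - Z.of_nat k)%Z in IH by lia.
          apply Rmult_le_reg_r with (INR c); auto.
          assert (IZR (u - Z.of_nat c) <= IZR (u - 1 - Z.of_nat k)) by (apply IZR_le; lia).
          field_simplify; [|lra]. nra. }
        rewrite minus_IZR, <- INR_IZR in H1.
        replace (INR c * (m * (IZR u - INR c) / INR c)) with (m * (IZR u - INR c)) in H1 by (field; lra).
        assert (q * e u >= q * m + p * (m * (IZR u - INR c))) by nra.
        assert (q * (e u * INR c) >= q * (m * IZR u)).
        { rewrite <- Hpq in *. nra. }
        apply Rmult_le_reg_l with q; [unfold q; lra|]. lra. }
    apply Rle_antisym; auto. apply Rnot_lt_le. intros Hpos.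
    destruct (INR_unbounded (INR c / m)) as [N HN].
    pose proof (Hlin (Z.of_nat N)). rewrite <- INR_IZR in H0.
    assert (e (Z.of_nat N) <= 1).
    { unfold e. rewrite Hb1. pose proof (piw_bounds c p Hp1 (Z.of_nat N)). unfold pi. lra. }
    assert (INR c / m * m < INR N * m) by nra.
    replace (INR c / m * m) with (INR c) in H2 by (field; lra).
    nra.
Qed.

Lemma pi_eq_b u : pi u = b u.
Proof.
  assert (forall u, e u = 0).
  { intros v. induction v as [v Hv|v Hv IH] using Zind.
    - apply e_le0; auto.
    - pose proof (e_tel' v Hv). rewrite e1_zero in H.
      rewrite (wsum_const _ _ _ 0) in H by (intros k Hk; apply IH; lia).
      assert (q * e v = 0) by lra. unfold q in H0.
      apply Rmult_integral in H0. destruct H0; [lra|auto]. }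
  specialize (H u). unfold e in H. lra.
Qed.

End BSeq.

Lemma CV_disk_bounded (a : nat -> R) M x : (forall n, Rabs (a n) <= M) -> Rabs x < 1 -> CV_disk a x.
Proof.
  intros Ha Hx. unfold CV_disk.
  apply (@ex_series_le R_AbsRing R_CompleteNormedModule _ (fun n => M * Rabs x ^ n)).
  - intros n. change (norm (Rabs (a n * x ^ n))) with (Rabs (Rabs (a n * x ^ n))).
    rewrite Rabs_Rabsolu, Rabs_mult, <- RPow_abs. apply Rmult_le_compat_r.
    + apply pow_le, Rabs_pos.
    + apply Ha.
  - apply (ex_series_scal_l M (fun n => Rabs x ^ n)). exists (/(1 - Rabs x)). apply is_series_geom.
    rewrite Rabs_Rabsolu; auto.
Qed.

Lemma ex_pseries_bounded (a : nat -> R) M x : (forall n, Rabs (a n) <= M) -> Rabs x < 1 -> ex_pseries a x.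
Proof. intros; apply CV_disk_correct; eapply CV_disk_bounded; eauto. Qed.

Lemma CV_radius_pos (a : nat -> R) M : (forall n, Rabs (a n) <= M) -> Rbar_lt 0 (CV_radius a).
Proof.
  intros Ha. apply Rbar_lt_le_trans with (Finite (1/2)). simpl; lra.
  unfold CV_radius. destruct (Lub_Rbar_correct (CV_disk a)) as [Hub _]. apply Hub.
  eapply CV_disk_bounded; eauto. rewrite Rabs_pos_eq; lra.
Qed.

Lemma PSeries_one w : Rabs w < 1 -> PSeries (fun _ => 1) w = / (1 - w).
Proof.
  intros Hw. apply is_pseries_unique. apply is_pseries_R.
  apply (is_series_ext (fun n => w ^ n)). intros n; rewrite Rmult_1_l; reflexivity. apply is_series_geom; auto.
Qed.

Ltac feed H := repeat (specialize (H ltac:(assumption))).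

Section Analytic.
Variables (c : nat) (theta : R).
Hypothesis Hc : (1 <= c)%nat.
Hypothesis Ht1 : INR c / (INR c + 1) <= theta.
Hypothesis Ht2 : theta < 1.

Let p := 1 - theta.
Lemma Hp : 0 < p.
Proof. unfold p; lra. Qed.
Lemma Hq : 0 < 1 - p.
Proof.
  unfold p. assert (0 < INR c) by (apply lt_0_INR; lia).
  assert (0 < INR c / (INR c + 1)) by (apply Rdiv_lt_0_compat; lra). lra.
Qed.
Lemma Hpc : p * INR c <= 1 - p.
Proof.
  unfold p. assert (0 < INR c) by (apply lt_0_INR; lia).
  assert (INR c <= theta * (INR c + 1)).
  { apply Rmult_le_compat_r with (r := INR c + 1) in Ht1; [|lra].
    replace (INR c / (INR c + 1) * (INR c + 1)) with (INR c) in Ht1 by (field; lra). lra. }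
  nra.
Qed.
Lemma Hp1 : 0 <= p <= 1.
Proof. pose proof Hp; pose proof Hq; lra. Qed.

Let r := p / (1 - p).
Definition bn (n : nat) : R := bt c (p / (1 - p)) (Z.of_nat n).
Definition hn (n : nat) : R := 1 - bn n.

Lemma bn_bounds n : 0 <= bn n <= 1.
Proof.
  pose proof Hp; pose proof Hq; pose proof Hpc.
  pose proof (b_bounds c p) as HB. feed HB. apply HB.
Qed.

Lemma bn_abs n : Rabs (bn n) <= 1.
Proof. pose proof (bn_bounds n). rewrite Rabs_pos_eq; lra. Qed.
Lemma hn_abs n : Rabs (hn n) <= 1.
Proof. pose proof (bn_bounds n). unfold hn. rewrite Rabs_pos_eq; lra. Qed.

Lemma coef_id n : (1-p) * hn n - PS_incr_1 hn n + p * PS_incr_n hn (S c) n =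
   (if Nat.eqb n 1 then (1-p) - p * INR c else 0).
Proof.
  pose proof Hp; pose proof Hq; pose proof Hpc.
  rewrite PS_incr_n_simplify.
  destruct n as [|[|k]].
  - destruct (Compare_dec.le_lt_dec (S c) 0); [lia|]. simpl.
    unfold hn, bn. rewrite bt_le0 by lia. unfold zero; simpl. ring.
  - destruct (Compare_dec.le_lt_dec (S c) 1); [lia|]. simpl.
    unfold hn, bn. unfold zero; simpl.
    replace (bt c (p / (1 - p)) 0%Z) with 1 by (symmetry; apply bt_le0; lia).
    rewrite (bt_rec _ _ 1%Z) by lia. rewrite (wsum_const _ _ _ 1).
    2:{ intros j Hj. apply bt_le0. lia. }
    field. lra.
  - pose proof (b_orig c p) as HO. feed HO. specialize (HO (Z.of_nat (S k)) ltac:(lia)).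
    simpl PS_incr_1. unfold hn, bn.
    replace (Z.of_nat (S (S k))) with (Z.of_nat (S k) + 1)%Z by lia.
    destruct (Compare_dec.le_lt_dec (S c) (S (S k))).
    + replace (Z.of_nat (S (S k) - S c)) with (Z.of_nat (S k) - Z.of_nat c)%Z by lia.
      simpl Nat.eqb. rewrite HO. ring.
    + rewrite (bt_le0 c _ (Z.of_nat (S k) - Z.of_nat c)%Z) in HO by lia.
      simpl Nat.eqb. rewrite HO. unfold zero; simpl. ring.
Qed.

Lemma EH w : Rabs w < 1 ->
  ((1-p) - w + p * w ^ (S c)) * PSeries hn w = ((1-p) - p * INR c) * w.
Proof.
  intros Hw.
  assert (exh : ex_pseries hn w) by (eapply ex_pseries_bounded; [apply hn_abs|auto]).
  assert (L : PSeries (fun n => (1-p) * hn n - PS_incr_1 hn n + p * PS_incr_n hn (S c) n) w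
     = (1-p) * PSeries hn w - w * PSeries hn w + p * (w ^ (S c) * PSeries hn w)).
  { transitivity (PSeries (PS_plus (PS_minus (PS_scal (1-p) hn) (PS_incr_1 hn)) (PS_scal p (PS_incr_n hn (S c)))) w).
    { apply PSeries_ext. intros n. reflexivity. }
    assert (e1 : ex_pseries (PS_scal (1-p) hn) w).
    { apply ex_pseries_scal; [unfold mult; simpl; apply Rmult_comm | exact exh]. }
    assert (e2 : ex_pseries (PS_incr_1 hn) w) by (apply ex_pseries_incr_1; exact exh).
    assert (e3 : ex_pseries (PS_minus (PS_scal (1-p) hn) (PS_incr_1 hn)) w)
      by (apply ex_pseries_minus; assumption).
    assert (e4 : ex_pseries (PS_scal p (PS_incr_n hn (S c))) w).
    { apply ex_pseries_scal; [unfold mult; simpl; apply Rmult_comm | ].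
      apply ex_pseries_incr_n; exact exh. }
    rewrite PSeries_plus by assumption. rewrite PSeries_minus by assumption.
    rewrite !PSeries_scal, PSeries_incr_1, PSeries_incr_n. reflexivity. }
  set (k := (1 - p) - p * INR c).
  assert (Rr : PSeries (fun n => (1-p) * hn n - PS_incr_1 hn n + p * PS_incr_n hn (S c) n) w = k * w).
  { transitivity (PSeries (PS_incr_1 (fun n => if Nat.eqb n 0 then k else 0)) w).
    { apply PSeries_ext. intros n. rewrite coef_id. destruct n as [|[|n]]; reflexivity. }
    rewrite PSeries_incr_1.
    rewrite PSeries_decr_1.
    2:{ apply (ex_pseries_bounded _ (Rabs k)); auto. intros [|n]; simpl; rewrite ?Rabs_R0; try lra.
        apply Rabs_pos. }
    rewrite (PSeries_ext (PS_decr_1 (fun n => if Nat.eqb n 0 then k else 0)) (fun _ => 0))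
      by (intros; reflexivity).
    rewrite PSeries_const_0. simpl. ring. }
  rewrite L in Rr. rewrite <- Rr. ring.
Qed.

Lemma xi_eq w : Rabs w < (1 - p) / 2 -> xi c theta w = PSeries bn w.
Proof.
  intros Hw. pose proof Hp as Hp'; pose proof Hq as Hq'.
  assert (Hw1 : Rabs w < 1) by lra.
  assert (exh : ex_pseries hn w) by (eapply ex_pseries_bounded; [apply hn_abs|auto]).
  assert (ex1 : ex_pseries (fun _ => 1) w) by (apply (ex_pseries_bounded _ 1); auto; intros; rewrite Rabs_R1; lra).
  assert (HB : PSeries bn w = / (1 - w) - PSeries hn w).
  { rewrite <- PSeries_one by auto. rewrite <- PSeries_minus by auto.
    apply PSeries_ext. intros n. change (PS_minus (fun _ => 1) hn n) with (1 - hn n). unfold hn. ring. }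
  set (E := (1-p) - w + p * w ^ (S c)).
  assert (HE : 0 < E).
  { unfold E. assert (Rabs (w ^ (S c)) <= Rabs w).
    { rewrite <- RPow_abs. change (Rabs w ^ S c) with (Rabs w * Rabs w ^ c).
      apply Rle_trans with (Rabs w * 1); [|lra].
      apply Rmult_le_compat_l. apply Rabs_pos. rewrite <- (pow1 c). apply pow_incr. split; [apply Rabs_pos|lra]. }
    pose proof (Rabs_le_between (w ^ (S c)) (Rabs w)) as [Hb _].
    pose proof (Rle_abs w). specialize (Hb H). destruct Hb. nra. }
  pose proof (EH w Hw1) as HH. fold E in HH.
  assert (Hh : PSeries hn w = ((1-p) - p * INR c) * w / E) by (rewrite <- HH; field; lra).
  rewrite HB, Hh. unfold xi.
  assert (Hw1' : w <> 1). { intros ->. rewrite Rabs_R1 in Hw. lra. }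
  replace (w ^ (c + 1)) with (w * w ^ c) by (rewrite Nat.add_1_r; reflexivity).
  replace (w ^ (c + 2)) with (w * (w * w ^ c)) by (rewrite Nat.add_succ_r, Nat.add_1_r; reflexivity).
  unfold E in *. unfold p in *.
  change (w ^ (S c)) with (w * w ^ c) in *.
  remember (w ^ c) as X eqn:HX. clear HX.
  replace ((1 - theta) * (w * (w * X)) - (1 - theta) * (w * X) - w ^ 2 + (1 + theta) * w - theta)
    with ((w - 1) * (1 - (1 - theta) - w + (1 - theta) * (w * X))) by ring.
  field. split; [lra|]. split; lra.
Qed.

Lemma Derive_xi u : Derive_n (xi c theta) u 0 / INR (fact u) = bn u.
Proof.
  pose proof Hp as Hp'; pose proof Hq as Hq'.
  rewrite (Derive_n_ext_loc _ (PSeries bn)).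
  - rewrite Derive_n_coef. field. apply INR_fact_neq_0.
    apply (CV_radius_pos _ 1). apply bn_abs.
  - assert (Hd : 0 < (1-p)/2) by lra.
    exists (mkposreal _ Hd). intros y Hy. apply xi_eq.
    change (Rabs (y - 0) < (1-p)/2) in Hy. rewrite Rminus_0_r in Hy. exact Hy.
Qed.

Lemma part1 u : walk_pi (Z.of_nat u) c 1 theta = Derive_n (xi c theta) u 0 / INR (fact u).
Proof.
  rewrite Derive_xi.
  assert (walk_pi (Z.of_nat u) c 1 theta = piw c p (Z.of_nat u)).
  { unfold walk_pi, union_prob, piw. f_equal. apply Lim_seq_ext. intros T. apply A_M. }
  rewrite H. pose proof Hp; pose proof Hq; pose proof Hpc; pose proof Hp1.
  pose proof (pi_eq_b c p) as HE. feed HE. apply HE.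
Qed.

End Analytic.

Theorem lemma3p5 (c : nat) (theta : R) :
  (1 <= c)%nat ->
  INR c / (INR c + 1) <= theta -> theta < 1 ->
  (forall u : nat,
      walk_pi (Z.of_nat u) c 1 theta = Derive_n (xi c theta) u 0 / INR (fact u)) /\
  (forall alpha beta : nat, (0 < alpha + beta)%nat ->
      p_quit alpha beta c 1 theta
      = walk_pi (Z.of_nat alpha - Z.of_nat c * Z.of_nat beta + 1)%Z c 1 theta).
Proof.
  intros Hc H1 H2. split.
  - intros u. apply part1; auto.
  - intros alpha beta Hab. apply part2; auto.
Qed.
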